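(* Let $\mathbf p=(p_1,p_2)^T\in\mathbb{Z}^2\setminus\{\mathbf0\}$ be such that $\kappa=\gcd(|p_1|,|p_2|)$ is odd. Then there exists a sequence of positive integers $N$ increasing without bound such that for each such $N$ and every $\mathbf a\in\mathcal D$, any two non-consecutive lattice points of $\Sigma'_{\mathbf a}$ cannot both lie in $D_{\mathbf p}$; i.e. if $\mathbf x,\mathbf y\in\Sigma'_{\mathbf a}\cap D_{\mathbf p}$ then $\mathbf y\in\{\mathbf x,\widehat{\mathbf x+\mathbf p},\widehat{\mathbf x-\mathbf p}\}$.
   Context: For a positive integer $N$: $\mathcal D=[-N,N]^2\cap\mathbb{Z}^2$; for $\mathbf k\in\mathbb{Z}^2$, $\widehat{\mathbf k}$ is the unique element of $\mathcal D$ with $\mathbf k-\widehat{\mathbf k}\in(2N+1)\mathbb{Z}^2$; $\Sigma'_{\mathbf a}=\{\widehat{\mathbf a+k\mathbf p}:k\in\mathbb{Z}\}$ for $\mathbf a\in\mathcal D$; and $D_{\mathbf p}=\{\mathbf x\in\mathcal D:|\mathbf x|<|\mathbf p|\}$. Here $\gcd(p_1,0)=|p_1|$. *)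

(* Defs.v *)
From Stdlib Require Import ZArith.
Open Scope Z_scope.

Definition pt := (Z * Z)%type.

Definition inD (N : Z) (x : pt) : Prop :=
  -N <= fst x <= N /\ -N <= snd x <= N.

Definition hat1 (N c : Z) : Z := ((c + N) mod (2 * N + 1)) - N.

(* \widehat{k}: the unique element of D congruent to k modulo (2N+1)Z^2 *)
Definition hat (N : Z) (k : pt) : pt := (hat1 N (fst k), hat1 N (snd k)).

Definition padd (x y : pt) : pt := (fst x + fst y, snd x + snd y).
Definition psub (x y : pt) : pt := (fst x - fst y, snd x - snd y).
Definition pscale (k : Z) (x : pt) : pt := (k * fst x, k * snd x).

Definition norm2 (x : pt) : Z := fst x * fst x + snd x * snd x.

Definition inSigma (N : Z) (p a x : pt) : Prop :=
  exists k : Z, x = hat N (padd a (pscale k p)).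

Definition inDp (N : Z) (p x : pt) : Prop :=
  inD N x /\ norm2 x < norm2 p.

(* Main.v *)
Require Import Defs.
From Stdlib Require Import ZArith Lia Psatz.
Open Scope Z_scope.

Lemma core (g b1 b2 u t r m v1 v2 w1 w2 p1 p2 q n : Z) :
  p1 = g*b1 -> p2 = g*b2 -> q = g*r -> n = p1*p1+p2*p2 ->
  0 < g -> u * b1 + t * b2 = 1 ->
  2 * n < q -> 0 < n ->
  w1 = m * p1 + q * v1 -> w2 = m * p2 + q * v2 ->
  w1*w1 + w2*w2 < 4 * n ->
  exists h, -1 <= h <= 1 /\ w1 = h * p1 /\ w2 = h * p2.
Proof.
  intros P1 P2 Q N Hg Hb Hq Hn E1 E2 Hw.
  assert (HL : (w1*p2 - w2*p1)*(w1*p2 - w2*p1) + (w1*p1+w2*p2)*(w1*p1+w2*p2) = (w1*w1+w2*w2)*n)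
    by (rewrite N; ring).
  assert (HD : (w1*p2 - w2*p1)*(w1*p2 - w2*p1) < q*q).
  { assert (0 <= (w1*p1+w2*p2)*(w1*p1+w2*p2)) by apply Z.square_nonneg.
    assert ((w1*w1+w2*w2)*n < (4*n)*n) by (apply Z.mul_lt_mono_pos_r; timeout 10 lia).
    assert ((2*n)*(2*n) < q*q) by (apply Z.mul_lt_mono_nonneg; timeout 10 lia). timeout 10 lia. }
  assert (HE : w1*p2 - w2*p1 = q * (v1*p2 - v2*p1)) by (rewrite E1, E2; ring).
  assert (Hq0 : 0 < q) by (clear -Hq Hn; timeout 10 lia).
  assert (E0 : v1*p2 - v2*p1 = 0).
  { rewrite HE in HD. set (z := v1*p2 - v2*p1) in *.
    destruct (Z.eq_dec z 0) as [|Hne]; auto.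
    exfalso. assert (1 <= z*z) by (clear -Hne; timeout 10 nia).
    assert (q*q*1 <= q*q*(z*z)) by (apply Z.mul_le_mono_nonneg_l; timeout 10 lia).
    replace (q*z*(q*z)) with (q*q*(z*z)) in HD by ring. clear -HD H0. timeout 10 lia. }
  assert (E3 : v1*b2 = v2*b1).
  { rewrite P1, P2 in E0. assert (g * (v1*b2 - v2*b1) = 0) by (rewrite <- E0; ring).
    apply Z.mul_eq_0 in H. clear -H Hg. timeout 10 lia. }
  set (s := u*v1 + t*v2).
  assert (Hs1 : v1 = s*b1).
  { unfold s. transitivity (v1 * (u*b1+t*b2)); [rewrite Hb; ring|].
    replace (v1 * (u * b1 + t * b2)) with (u*v1*b1 + t*(v1*b2)) by ring.
    rewrite E3; ring. }
  assert (Hs2 : v2 = s*b2).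
  { unfold s. transitivity (v2 * (u*b1+t*b2)); [rewrite Hb; ring|].
    replace (v2 * (u * b1 + t * b2)) with (u*(v2*b1) + t*v2*b2) by ring.
    rewrite <- E3; ring. }
  exists (m + r*s).
  assert (W1 : w1 = (m + r*s) * p1) by (rewrite E1, Hs1, P1, Q; ring).
  assert (W2 : w2 = (m + r*s) * p2) by (rewrite E2, Hs2, P2, Q; ring).
  split; [|split; assumption].
  set (h := m + r*s) in *.
  assert (Hh : (h*h)*n < 4*n).
  { replace ((h*h)*n) with (w1*w1+w2*w2) by (rewrite W1, W2, N; ring). exact Hw. }
  assert (h*h < 4) by (apply (Z.mul_lt_mono_pos_r n); [exact Hn|]; exact Hh).
  clear -H. timeout 10 nia.
Qed.

Lemma hat1_eq (N c : Z) : 0 < 2*N+1 -> exists d, hat1 N c = c - (2*N+1)*d.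
Proof.
  intros H. exists ((c+N)/(2*N+1)). unfold hat1.
  rewrite Z.mod_eq by lia. ring.
Qed.

Lemma hat1_id (N c : Z) : -N <= c <= N -> hat1 N c = c.
Proof.
  intros H. unfold hat1. rewrite Z.mod_small by lia. ring.
Qed.

Lemma par (x1 x2 y1 y2 n : Z) : x1*x1+x2*x2 < n -> y1*y1+y2*y2 < n ->
  (y1-x1)*(y1-x1) + (y2-x2)*(y2-x2) < 4*n.
Proof.
  intros H1 H2.
  assert (0 <= (y1+x1)*(y1+x1) + (y2+x2)*(y2+x2)) by
    (pose proof (Z.square_nonneg (y1+x1)); pose proof (Z.square_nonneg (y2+x2)); lia).
  nia.
Qed.

Theorem lemma6 (p : pt) (hp : p <> (0, 0))
  (hodd : Z.odd (Z.gcd (fst p) (snd p)) = true) :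
  forall M : Z, exists N : Z, M < N /\ 0 < N /\
    forall a : pt, inD N a ->
    forall x y : pt,
      inSigma N p a x -> inSigma N p a y ->
      inDp N p x -> inDp N p y ->
      y = x \/ y = hat N (padd x p) \/ y = hat N (psub x p).
Proof.
  destruct p as [p1 p2]. simpl in hodd. intros M.
  set (g := Z.gcd p1 p2) in *.
  assert (Hg0 : 0 <= g) by apply Z.gcd_nonneg.
  destruct (proj1 (Z.odd_spec g) hodd) as [c Hc].
  destruct (Z.gcd_divide_l p1 p2) as [b1 Hb1].
  destruct (Z.gcd_divide_r p1 p2) as [b2 Hb2].
  destruct (Z.gcd_bezout p1 p2 g eq_refl) as [u [t Hut]].
  fold g in Hb1, Hb2, Hut.
  assert (Hn : 0 < p1*p1 + p2*p2).
  { destruct (Z.eq_dec p1 0) as [E1|E1]; destruct (Z.eq_dec p2 0) as [E2|E2].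
    - exfalso; apply hp; rewrite E1, E2; reflexivity.
    - pose proof (Z.square_nonneg p1). assert (0 < p2*p2) by (clear -E2; nia). lia.
    - pose proof (Z.square_nonneg p2). assert (0 < p1*p1) by (clear -E1; nia). lia.
    - pose proof (Z.square_nonneg p2). assert (0 < p1*p1) by (clear -E1; nia). lia. }
  set (n := p1*p1 + p2*p2) in *.
  set (tt := Z.abs M + 2*n + 1).
  assert (Htt : 0 < tt) by (unfold tt; clear -Hn; lia).
  assert (Hc0 : 0 <= c) by (clear -Hc Hg0; lia).
  assert (HcT : 0 <= c*tt) by (apply Z.mul_nonneg_nonneg; lia).
  exists (2*c*tt + c + tt).
  assert (HMt : M < tt) by (unfold tt; clear -Hn; lia).
  split; [clear -HcT Hc0 HMt; lia|]. split; [clear -HcT Hc0 Htt; lia|].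
  set (N := 2*c*tt + c + tt).
  assert (HqE : 2*N+1 = g*(2*tt+1)) by (unfold N; rewrite Hc; ring).
  assert (Hgp : 0 < g) by (clear -Hc Hg0; lia).
  assert (Hb : u*b1 + t*b2 = 1).
  { rewrite Hb1, Hb2 in Hut.
    assert (g * (u*b1 + t*b2 - 1) = 0) by (transitivity (u*(b1*g)+t*(b2*g) - g); [ring | rewrite Hut; ring]).
    apply Z.mul_eq_0 in H. clear -H Hgp. lia. }
  intros [a1 a2] Ha [x1 x2] [y1 y2] [k Hk] [l Hl] [Hx Hxn] [Hy Hyn].
  unfold hat, padd, pscale in Hk, Hl; simpl in Hk, Hl.
  injection Hk as Hk1 Hk2. injection Hl as Hl1 Hl2.
  assert (Hq : 0 < 2*N+1) by (unfold N; clear -HcT Hc0 Htt; lia).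
  destruct (hat1_eq N (a1 + k*p1) Hq) as [d1 D1].
  destruct (hat1_eq N (a2 + k*p2) Hq) as [d2 D2].
  destruct (hat1_eq N (a1 + l*p1) Hq) as [e1 F1].
  destruct (hat1_eq N (a2 + l*p2) Hq) as [e2 F2].
  unfold inD, norm2 in *; cbn [fst snd] in *.
  fold n in Hxn, Hyn.
  assert (Hqn : 2*n < 2*N+1).
  { rewrite HqE. assert (2*tt+1 <= g*(2*tt+1)) by (clear -Hgp Htt; nia).
    unfold tt in H. clear -H Hn. lia. }
  destruct (core g b1 b2 u t (2*tt+1) (l-k) (d1-e1) (d2-e2) (y1-x1) (y2-x2)
    p1 p2 (2*N+1) n (eq_trans Hb1 (Z.mul_comm _ _)) (eq_trans Hb2 (Z.mul_comm _ _)) HqE eq_refl Hgp Hb Hqn Hn) as [h [Hh [W1 W2]]].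
  - rewrite Hk1, Hl1, D1, F1. ring.
  - rewrite Hk2, Hl2, D2, F2. ring.
  - apply par; assumption.
  - unfold hat, padd, psub; simpl.
    assert (Hh3 : h = 0 \/ h = 1 \/ h = -1) by (clear -Hh; lia).
    destruct Hh3 as [ -> | [ -> | -> ] ].
    + left. f_equal; lia.
    + right; left. rewrite !hat1_id by lia. f_equal; lia.
    + right; right. rewrite !hat1_id by lia. f_equal; lia.
Qed.
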